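(* Let $V$ be a finite set, $\mathcal{F}\subseteq 2^V$ a minimal hereditary family with $\delta(\mathcal{F})\ge 12$, and $x\in V$ with $f_3(x)=0$. Then $u(x)\ge 5.3$. Moreover, $u(x)=5.3$ if and only if $f_1(x)=5$, $f_2(x)=6$, and $\omega(x,F\cup\{x\})=\frac{6}{20}$ for every $F\in\mathcal{F}(x)$ with $|F|=2$.
   Context: Let $V$ be a finite set. A family $\mathcal{F}\subseteq 2^V$ is hereditary if $F'\subseteq F\in\mathcal{F}$ implies $F'\in\mathcal{F}$. For $x\in V$: the link is $\mathcal{F}(x)=\{F\setminus\{x\}: x\in F\in\mathcal{F}\}$, $d_{\mathcal{F}}(x)=|\mathcal{F}(x)|$, $\delta(\mathcal{F})=\min_{x\in V}d_{\mathcal{F}}(x)$. For $A\subseteq V$, $d_{\mathcal{F}}(A)=|\{F\in\mathcal{F}: A\subseteq F\}|$. A set $F\in\mathcal{F}$ is maximal if no other member strictly contains it; a hereditary $\mathcal{F}$ with $\delta(\mathcal{F})\ge 12$ is minimal if $\delta(\mathcal{F}\setminus\{F\})\le 11$ for every maximal $F\in\mathcal{F}$. $f_i(x)$ denotes the number of $i$-element sets in $\mathcal{F}(x)$. Weights: for $x\in F\in\mathcal{F}$ define $\omega(x,F)$ as follows. If $|F|\ne 3$, $\omega(x,F)=1/|F|$. If $|F|=3$: if $F$ is contained in some 4-element member of $\mathcal{F}$, every element of $F$ gets $\omega=1/3$; otherwise order the three 2-subsets of $F$ as $e_1,e_2,e_3$ with $d_{\mathcal{F}}(e_1)\le d_{\mathcal{F}}(e_2)\le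 d_{\mathcal{F}}(e_3)$; if $d_{\mathcal{F}}(e_2)\le 4<d_{\mathcal{F}}(e_3)$, the two elements of $e_3$ get $\omega=7/20$ and the element of $F\setminus e_3$ gets $6/20$; else if $d_{\mathcal{F}}(e_1)\le 4<d_{\mathcal{F}}(e_2)$, the two elements of $e_1$ get $7/20$ and the element of $F\setminus e_1$ gets $6/20$; otherwise every element of $F$ gets $1/3$. The weight of $x$ is $u(x)=\sum_{x\in F\in\mathcal{F}}\omega(x,F)$. *)

(* Defs.v *)
From mathcomp Require Import all_boot all_order all_algebra.
Set Implicit Arguments. Unset Strict Implicit. Unset Printing Implicit Defensive.
Import Order.TTheory GRing.Theory Num.Theory.

Local Open Scope ring_scope.
Section Defs.
Variable V : finType.
Implicit Types (F : {set {set V}}) (A B : {set V}) (x y : V).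

Definition hereditary F : Prop :=
  forall A B, B \subset A -> A \in F -> B \in F.

Definition link F x : {set {set V}} := [set A :\ x | A in [set A in F | x \in A]].

Definition degv F x : nat := #|link F x|.

Definition degs F A : nat := #|[set B in F | A \subset B]|.

Definition delta_ge F (k : nat) : Prop := forall y, (k <= degv F y)%N.

Definition maximal_in F A : bool :=
  (A \in F) && [forall B in F, (A \subset B) ==> (B == A)].

Definition minimal12 F : Prop :=
  delta_ge F 12 /\
  forall A, maximal_in F A -> exists y, (degv (F :\ A) y <= 11)%N.

Definition fcount F x (i : nat) : nat := #|[set A in link F x | #|A| == i]|.

Definition pairs A : {set {set V}} := [set e in powerset A | #|e| == 2%N].

(* For |A| = 3 and A
   not in a 4-element member: with e1,e2,e3 the 2-subsets ordered by d_F,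
   "d(e2) <= 4 < d(e3)" means exactly one 2-subset (e3) has d_F > 4, and
   "d(e1) <= 4 < d(e2)" (with the first case failing) means exactly two have d_F > 4
   (e1 being the unique one with d_F <= 4). *)
Definition omega F x A : rat :=
  if #|A| != 3%N then (#|A|%:R)^-1
  else if [exists B in F, (#|B| == 4%N) && (A \subset B)] then 3%:R^-1
  else
    let high := [set e in pairs A | (4 < degs F e)%N] in
    let low  := [set e in pairs A | (degs F e <= 4)%N] in
    if #|high| == 1%N then
      (if [exists e in high, x \in e] then (7%:R / 20%:R) else (6%:R / 20%:R))
    else if #|high| == 2%N then
      (if [exists e in low, x \in e] then (7%:R / 20%:R) else (6%:R / 20%:R))
    else 3%:R^-1.

Definition uweight F x : rat := \sum_(A in F | x \in A) omega F x A.

End Defs.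

(* Main.v *)
Require Import Defs.
From mathcomp Require Import all_boot all_order all_algebra.
From mathcomp Require Import lra zify.
Import Order.TTheory GRing.Theory Num.Theory.
Local Open Scope ring_scope.
Set Implicit Arguments. Unset Strict Implicit.

Lemma om_n3 (V : finType) F x (A : {set V}) : #|A| != 3%N -> omega F x A = (#|A|%:R)^-1.
Proof. by move=> h; rewrite /omega h. Qed.
Lemma om_3 (V : finType) F x (A : {set V}) : #|A| = 3%N -> 3%:R / 10%:R <= omega F x A.
Proof.
move=> h; rewrite /omega.
case: ifP => [H|_]; first by exfalso; move: H; rewrite h.
case: ifP => _; first lra.
case: ifP => _; first (case: ifP => _; lra).
case: ifP => _; first (case: ifP => _; lra).
lra.
Qed.

Section Aux.
Variable V : finType.
Variable F : {set {set V}}.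
Variable x : V.
Hypothesis hF : hereditary F.

Lemma memL (B : {set V}) : (B \in link F x) = (x \notin B) && (x |: B \in F).
Proof.
apply/imsetP/andP.
- case=> A; rewrite inE => /andP[AF xA] ->.
  by rewrite setD11 setD1K.
- case=> xB xBF; exists (x |: B); last by rewrite setU1K.
  by rewrite inE xBF setU11.
Qed.

Lemma L_down (B C : {set V}) : B \in link F x -> C \subset B -> C \in link F x.
Proof.
rewrite !memL => /andP[xB xBF] CB; apply/andP; split.
- by apply: contra xB; apply: (subsetP CB).
- by apply: hF xBF; apply: setUS.
Qed.

Hypothesis f3 : fcount F x 3 = 0%N.

Lemma L_small (B : {set V}) : B \in link F x -> (#|B| <= 2)%N.
Proof.
move=> BL; rewrite leqNgt; apply/negP => hB.
have : (0 < #|[set C : {set V} | C \subset B & #|C| == 3%N]|)%N.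
  by rewrite cards_draws bin_gt0.
rewrite card_gt0 => /set0Pn[C]; rewrite inE => /andP[CB /eqP C3].
have CL := @L_down B C BL CB.
have : C \in [set A in link F x | #|A| == 3%N] by rewrite inE CL C3.
move: f3; rewrite /fcount => /eqP; rewrite cards_eq0 => /eqP ->.
by rewrite inE.
Qed.

Definition cw (B : {set V}) : rat :=
  3%:R / 10%:R + (if #|B| == 1%N then 5%:R^-1 else 0)
              + (if #|B| == 0%N then 7%:R / 10%:R else 0).

Lemma cw_ge0 (B : {set V}) : x \notin B -> (#|B| <= 2)%N -> cw B <= omega F x (x |: B).
Proof.
move=> xB hB.
have hc : #|x |: B| = #|B|.+1 by rewrite cardsU1 xB.
have [h2|h2] := eqVneq #|B| 2%N.
  have e1 : (#|B| == 1%N) = false by rewrite h2.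
  have e0 : (#|B| == 0%N) = false by rewrite h2.
  rewrite /cw e1 e0; apply: le_trans (om_3 F x (A := x |: B) _); first lra.
  by rewrite hc h2.
have hn : #|x |: B| != 3%N by rewrite hc eqSS.
rewrite (om_n3 F x hn) hc /cw.
have : (#|B| == 0)%N || (#|B| == 1)%N.
  by move: hB h2; case: #|B| => [|[|[|n]]].
case/orP => /eqP ->.
- have -> : (0 == 1)%N = false by []. have -> : (0 == 0)%N = true by []. rewrite invr1. lra.
- have -> : (1 == 1)%N = true by []. have -> : (1 == 0)%N = false by []. lra.
Qed.

Lemma omega_ge (B : {set V}) : B \in link F x -> cw B <= omega F x (x |: B).
Proof.
move=> BL; have := L_small BL; move: BL; rewrite memL => /andP[xB _] hB.
exact: cw_ge0 xB hB.
Qed.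

Lemma omega_eq (B : {set V}) : B \in link F x -> #|B| != 2%N -> omega F x (x |: B) = cw B.
Proof.
move=> BL h2; have := L_small BL; move: BL; rewrite memL => /andP[xB _] hB.
have hc : #|x |: B| = #|B|.+1 by rewrite cardsU1 xB.
have hn : #|x |: B| != 3%N by rewrite hc eqSS.
rewrite (om_n3 F x hn) hc /cw.
have : (#|B| == 0)%N || (#|B| == 1)%N.
  by move: hB h2; case: #|B| => [|[|[|n]]].
case/orP => /eqP ->.
- have -> : (0 == 1)%N = false by []. have -> : (0 == 0)%N = true by []. rewrite invr1. lra.
- have -> : (1 == 1)%N = true by []. have -> : (1 == 0)%N = false by []. lra.
Qed.

Lemma sum_if (L : {set {set V}}) (P : pred {set V}) (a : rat) :
  \sum_(B in L) (if P B then a else 0) = a *+ #|[set B in L | P B]|.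
Proof.
rewrite -sumr_const big_mkcond [RHS]big_mkcond /=.
by apply: eq_bigr => B _; rewrite inE; case: (B \in L); case: (P B).
Qed.

Lemma sum_cw :
  \sum_(B in link F x) cw B =
    3%:R / 10%:R * (#|link F x|)%:R + 5%:R^-1 * (fcount F x 1)%:R
    + 7%:R / 10%:R * (fcount F x 0)%:R.
Proof.
rewrite /cw !big_split /= sumr_const !sum_if /fcount.
by congr (_ + _ + _); rewrite mulr_natr.
Qed.

Lemma uw_eq : uweight F x = \sum_(B in link F x) omega F x (x |: B).
Proof.
rewrite /uweight /link big_imset /=.
- apply: eq_big => A; first by rewrite inE.
  by move=> /andP[_ xA]; rewrite setD1K.
- move=> A1 A2; rewrite !inE => /andP[_ x1] /andP[_ x2] e.
  by rewrite -(setD1K x1) -(setD1K x2) e.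
Qed.

Lemma card_if (L : {set {set V}}) (i : nat) :
  #|[set A in L | #|A| == i]| = (\sum_(B in L) (#|B| == i : nat))%N.
Proof.
rewrite -sum1_card big_mkcond [RHS]big_mkcond /=.
by apply: eq_bigr => B _; rewrite inE; case: (B \in L); case: (#|B| == i).
Qed.

Lemma card_sizes :
  #|link F x| = (fcount F x 0 + fcount F x 1 + fcount F x 2)%N.
Proof.
rewrite /fcount !card_if -!big_split /= -sum1_card.
apply: eq_bigr => B BL.
by have := L_small BL; case: #|B| => [|[|[|n]]].
Qed.

Lemma f0_eq : (0 < #|link F x|)%N -> fcount F x 0 = 1%N.
Proof.
rewrite card_gt0 => /set0Pn[B BL].
have e0 : set0 \in link F x by apply: L_down BL (sub0set B).
rewrite /fcount (_ : [set A in link F x | #|A| == 0%N] = [set set0]) ?cards1 //.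
apply/setP => A; rewrite !inE; apply/andP/eqP.
- by case=> _ /eqP/cards0_eq.
- by move=> ->; rewrite e0 cards0.
Qed.

Lemma f2_bound : (fcount F x 2 <= 'C(fcount F x 1, 2))%N.
Proof.
set S := [set y | [set y] \in link F x].
have e1 : fcount F x 1 = #|S|.
  rewrite /fcount (_ : [set A in link F x | #|A| == 1%N] = [set [set y] | y in S]).
    by rewrite card_imset //; apply: set1_inj.
  apply/setP => A; rewrite inE; apply/andP/imsetP.
  - by case=> AL /cards1P[y Ay]; exists y => //; rewrite inE -Ay.
  - by case=> y; rewrite inE => yS ->; rewrite yS cards1.
rewrite e1 -cards_draws /fcount; apply: subset_leq_card; apply/subsetP => A.
rewrite !inE => /andP[AL ->]; rewrite andbT; apply/subsetP => y yA.
by rewrite inE; apply: L_down AL _; rewrite sub1set.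
Qed.

End Aux.

Theorem mainTheorem9 (V : finType) (F : {set {set V}}) (x : V) :
  hereditary F -> minimal12 F -> fcount F x 3 = 0%N ->
  (53%:R / 10%:R <= uweight F x) /\
  (uweight F x = 53%:R / 10%:R <->
     [/\ fcount F x 1 = 5%N, fcount F x 2 = 6%N &
         forall B, B \in link F x -> #|B| = 2%N ->
           omega F x (x |: B) = 6%:R / 20%:R]).
Proof.
move=> hF [hd _] f3.
have n12 : (12 <= #|link F x|)%N := hd x.
have hsz := card_sizes hF f3.
have h0 : fcount F x 0 = 1%N by apply: (f0_eq hF); lia.
have hb := f2_bound x hF.
have f15 : (5 <= fcount F x 1)%N.
  rewrite leqNgt; apply/negP => h.
  have := leq_bin2l 2 (h : fcount F x 1 <= 4)%N.
  rewrite (_ : 'C(4, 2) = 6%N) //; lia.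
set D := \sum_(B in link F x) (omega F x (x |: B) - cw B).
have D0 : 0 <= D.
  by apply: sumr_ge0 => B BL; rewrite subr_ge0; apply: omega_ge.
have hu : uweight F x = (3%:R / 10%:R * (#|link F x|)%:R + 5%:R^-1 * (fcount F x 1)%:R
    + 7%:R / 10%:R * (fcount F x 0)%:R) + D.
  by rewrite (uw_eq F x) /D sumrB (sum_cw F x) addrC subrK.
have nr : 12%:R <= (#|link F x|)%:R :> rat by rewrite ler_nat.
have fr : 5%:R <= (fcount F x 1)%:R :> rat by rewrite ler_nat.
rewrite h0 in hu.
split; first lra.
split.
- move=> hu5.
  have : (#|link F x|)%:R == 12%:R :> rat by apply/eqP; lra.
  rewrite eqr_nat => /eqP n12'.
  have : (fcount F x 1)%:R == 5%:R :> rat by apply/eqP; lra.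
  rewrite eqr_nat => /eqP f1'.
  have DD : D = 0 by lra.
  split => //; first lia.
  move=> B BL B2.
  have Dn : forall C, C \in link F x -> 0 <= omega F x (x |: C) - cw C.
    by move=> C CL; rewrite subr_ge0; apply: omega_ge.
  have := psumr_eq0P Dn DD BL.
  have -> : cw B = 3%:R / 10%:R.
    rewrite /cw B2; have -> : (2 == 1)%N = false by [].
    have -> : (2 == 0)%N = false by []. lra.
  move=> /eqP; rewrite subr_eq0 => /eqP ->; lra.
- case=> f1' f2' hB.
  have n12' : #|link F x| = 12%N by lia.
  have DD : D = 0.
    apply: big1 => B BL.
    have [B2|B2] := eqVneq #|B| 2%N.
      rewrite hB // /cw B2; have -> : (2 == 1)%N = false by [].
      have -> : (2 == 0)%N = false by []. lra.
    by rewrite omega_eq // subrr.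
  rewrite hu DD n12' f1'; lra.
Qed.
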